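(* In the setting of the context, assume every irreducible $T$-module is thin, and let $\mathbf{C}\in T$ be the unique element satisfying $$\mathbf{C}+\frac{q\mathbf{A}\mathbf{B}-q^{-1}\mathbf{B}\mathbf{A}}{q^2-q^{-2}}=\frac{(\mathbf{c}+\mathbf{c}^{-1})(\Lambda+\Lambda^{-1})+(\mathbf{a}+\mathbf{a}^{-1})(\mathbf{b}+\mathbf{b}^{-1})}{q+q^{-1}}$$ together with $\mathbf{A}+\frac{q\mathbf{B}\mathbf{C}-q^{-1}\mathbf{C}\mathbf{B}}{q^2-q^{-2}}=\frac{(\mathbf{a}+\mathbf{a}^{-1})(\Lambda+\Lambda^{-1})+(\mathbf{b}+\mathbf{b}^{-1})(\mathbf{c}+\mathbf{c}^{-1})}{q+q^{-1}}$ and $\mathbf{B}+\frac{q\mathbf{C}\mathbf{A}-q^{-1}\mathbf{A}\mathbf{C}}{q^2-q^{-2}}=\frac{(\mathbf{b}+\mathbf{b}^{-1})(\Lambda+\Lambda^{-1})+(\mathbf{c}+\mathbf{c}^{-1})(\mathbf{a}+\mathbf{a}^{-1})}{q+q^{-1}}$. Then there exists a surjective $\mathbb{C}$-algebra homomorphism $\Delta_q\to T$ sending $\mathcal{A}\mapsto\mathbf{A}$, $\mathcal{B}\mapsto\mathbf{B}$, $\mathcal{C}\mapsto\mathbf{C}$.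
   Context: The universal Askey–Wilson algebra $\Delta_q$ is the associative unital $\mathbb{C}$-algebra with generators $\mathcal{A},\mathcal{B},\mathcal{C}$ and relations asserting that each of $\mathcal{A}+\frac{q\mathcal{B}\mathcal{C}-q^{-1}\mathcal{C}\mathcal{B}}{q^2-q^{-2}}$, $\mathcal{B}+\frac{q\mathcal{C}\mathcal{A}-q^{-1}\mathcal{A}\mathcal{C}}{q^2-q^{-2}}$, $\mathcal{C}+\frac{q\mathcal{A}\mathcal{B}-q^{-1}\mathcal{B}\mathcal{A}}{q^2-q^{-2}}$ is central. Fix a nonzero $q\in\mathbb{C}$ with $q^4\neq1$. Let $\Gamma$ be a finite connected distance-regular graph (undirected, no loops or multiple edges) with vertex set $X$, distance $\partial$, diameter $D\ge3$; $V=\mathbb{C}^X$. $A$ is the adjacency matrix, $E_0,\dots,E_D$ the primitive idempotents of the Bose–Mesner algebra with $E_0=|X|^{-1}J$ and $E_1,\dots,E_D$ a $Q$-polynomial ordering; $A=\sum\theta_iE_i$. Fix a vertex $x$; $E_i^*$ is the diagonal $0/1$ matrix projecting onto vertices at distance $i$ from $x$; $A^*$ is diagonal with $(y,y)$-entry $|X|(E_1)_{xy}$, $A^*=\sum\theta_i^*E_i^*$; $T$ is the algebra generated by $A,A^*$. Assume $q$-Racah type: $\theta_i=w+uq^{2i-D}+vq^{D-2i}$, $\theta_i^*=w^*+u^*q^{2i-D}+v^*q^{D-2i}$, $u,u^*,v,v^*\neq0$; fix $a,b$ with $a^2=u/v$, $b^2=u^*/v^*$; $\mathbf{A}=(A-wI)/(av)$,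 $\mathbf{B}=(A^*-w^*I)/(bv^* )$. For an irreducible $T$-module $W\subseteq V$: endpoint $\rho=\min\{i:E_i^*W\ne0\}$, dual endpoint $\tau=\min\{i:E_iW\neq0\}$, diameter $d=|\{i:E^*_iW\ne0\}|-1$; thin means $\dim E^*_iW\le1$ for all $i$. Put $a(W)=aq^{2\tau+d-D}$, $b(W)=bq^{2\rho+d-D}$. If $W$ is thin, $(\mathbf{A}|_W,\{E_{\tau+i}|_W\}_{i=0}^d,\mathbf{B}|_W,\{E^*_{\rho+i}|_W\}_{i=0}^d)$ is a Leonard system with eigenvalues $\vartheta_i=a(W)q^{2i-d}+a(W)^{-1}q^{d-2i}$ and dual eigenvalues $\vartheta^*_i=b(W)q^{2i-d}+b(W)^{-1}q^{d-2i}$; let $\kappa=0$ if $d=0$ and, for $d\ge1$, $\kappa=a(W)b(W)^{-1}q^{d-1}+a(W)^{-1}b(W)q^{1-d}+\phi_1/((q-q^{-1})(q^d-q^{-d}))$ where $\phi_1=(\vartheta^*_0-\vartheta^*_1)(\mathrm{trace}(E^*_\rho\mathbf{A}|_W)-\vartheta_d)$; $c(W)$ is a root of $\xi^2-\kappa\xi+1=0$ (defined up to reciprocal). Isomorphism of irreducible modules: linear bijection commuting with $T$; $\Psi$ = set of types; for $\psi\in\Psi$, $a(\psi),b(\psi),d(\psi),c(\psi)$ are $a(W),b(W)$, the diameter, and (a fixed choice of) $c(W)$ for $W$ of type $\psi$. $V_\psi$ = span of irreducible modules of type $\psi$, $V=\bigoplus_\psi V_\psi$, $e_\psi$ = identity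 on $V_\psi$, $0$ on other $V_\lambda$. Define $\mathbf{a}=\sum_\psi a(\psi)e_\psi$, $\mathbf{b}=\sum_\psi b(\psi)e_\psi$, $\mathbf{c}=\sum_\psi c(\psi)e_\psi$, $\Lambda=\sum_\psi q^{d(\psi)+1}e_\psi$ (these are invertible). *)

(* Defs.v *)
From HB Require Import structures.
From mathcomp Require Import all_boot all_algebra.
Set Implicit Arguments.
Unset Strict Implicit.
Unset Printing Implicit Defensive.
Import GRing.Theory.
Local Open Scope ring_scope.

Section Graph.
Variable n : nat.
Variable e : rel 'I_n.

Definition simple_graph : Prop := symmetric e /\ irreflexive e.

Fixpoint ball (k : nat) (y : 'I_n) : {set 'I_n} :=
  match k with
  | 0 => [set y]
  | k'.+1 => ball k' y :|: [set z | [exists w in ball k' y, e w z]]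
  end.

Definition gdist (y z : 'I_n) : nat := find (fun k => z \in ball k y) (iota 0 n).

Definition connected_graph : Prop := forall y z : 'I_n, exists k, z \in ball k y.

Definition diameter : nat := \max_(y < n) \max_(z < n) gdist y z.

(* intersection numbers p^h_{ij} are well defined *)
Definition distance_regular : Prop :=
  forall (y z y' z' : 'I_n) (i j : nat), gdist y z = gdist y' z' ->
    #|[set w | (gdist y w == i) && (gdist z w == j)]| =
    #|[set w | (gdist y' w == i) && (gdist z' w == j)]|.

End Graph.

Section Matrices.
Variable C : fieldType.
Variable n : nat.
Variable e : rel 'I_n.

Definition adjmx : 'M[C]_n := \matrix_(y, z) (e y z)%:R.
Definition distmx (i : nat) : 'M[C]_n := \matrix_(y, z) (gdist e y z == i)%:R.

Definition bose_mesner (D : nat) (M : 'M[C]_n) : Prop :=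
  exists c : 'I_D.+1 -> C, M = \sum_(i < D.+1) c i *: distmx i.

Definition hadamard (M N : 'M[C]_n) : 'M[C]_n := \matrix_(i, j) (M i j * N i j).

Definition primitive_idempotents (D : nat) (E : 'I_D.+1 -> 'M[C]_n) : Prop :=
  [/\ (forall i, bose_mesner D (E i)),
      (forall i j, E i *m E j = if i == j then E i else 0),
      (forall i, E i != 0),
      \sum_(i < D.+1) E i = 1%:M &
      (forall i (F G : 'M[C]_n), bose_mesner D F -> bose_mesner D G ->
          F *m F = F -> G *m G = G -> F *m G = 0 -> E i = F + G ->
          F = 0 \/ G = 0)].

(* Krein parameters:  E_i o E_j = |X|^{-1} sum_h q^h_{ij} E_h *)
Definition krein (D : nat) (E : 'I_D.+1 -> 'M[C]_n) (h i j : 'I_D.+1) : C :=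
  n%:R * \tr (E h *m hadamard (E i) (E j)) / \tr (E h).

Definition Q_polynomial (D : nat) (E : 'I_D.+1 -> 'M[C]_n) : Prop :=
  forall h i j : 'I_D.+1,
    ([|| (i + j < h)%N, (h + j < i)%N | (h + i < j)%N] -> krein E h i j = 0) /\
    ([|| h == (i + j)%N :> nat, i == (h + j)%N :> nat | j == (h + i)%N :> nat] ->
       krein E h i j != 0).

Definition Est (x : 'I_n) (i : nat) : 'M[C]_n :=
  diag_mx (\row_y (gdist e x y == i)%:R).

Definition dualA (x : 'I_n) (E1 : 'M[C]_n) : 'M[C]_n :=
  diag_mx (\row_y (n%:R * E1 x y)).

Inductive inT (A As : 'M[C]_n) : 'M[C]_n -> Prop :=
| inT_A : inT A As A
| inT_As : inT A As As
| inT_1 : inT A As 1%:M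
| inT_add M N : inT A As M -> inT A As N -> inT A As (M + N)
| inT_scale (c : C) M : inT A As M -> inT A As (c *: M)
| inT_mul M N : inT A As M -> inT A As N -> inT A As (M *m N).

(* Subspaces W of V = C^n are encoded as row spaces of matrices W:
   a column vector v lies in W iff v^T <= W.  An operator M acting on
   column vectors maps W into itself iff W *m M^T <= W. *)
Definition Tmodule (A As W : 'M[C]_n) : Prop :=
  forall M, inT A As M -> (W *m M^T <= W)%MS.

Definition irr_Tmodule (A As W : 'M[C]_n) : Prop :=
  [/\ Tmodule A As W, W != 0 &
      forall U : 'M[C]_n, Tmodule A As U -> (U <= W)%MS -> U = 0 \/ (U == W)%MS].

Definition thin (x : 'I_n) (W : 'M[C]_n) : Prop :=
  forall i : nat, (\rank (W *m (Est x i)^T) <= 1)%N.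

(* isomorphism of T-modules: a linear bijection W -> W' commuting with T.
   phi acts on row vectors (v^T |-> v^T *m phi). *)
Definition Tiso (A As W W' : 'M[C]_n) : Prop :=
  exists phi : 'M[C]_n,
    [/\ (W *m phi == W')%MS, \rank (W *m phi) = \rank W &
        forall M, inT A As M -> W *m M^T *m phi = W *m phi *m M^T].

Definition endpoint (x : 'I_n) (W : 'M[C]_n) : nat :=
  find (fun i => W *m (Est x i)^T != 0) (iota 0 n).

Definition dual_endpoint (D : nat) (E : 'I_D.+1 -> 'M[C]_n) (W : 'M[C]_n) : nat :=
  find (fun i => W *m (E (inord i))^T != 0) (iota 0 D.+1).

Definition mod_diameter (x : 'I_n) (W : 'M[C]_n) : nat :=
  (count (fun i => W *m (Est x i)^T != 0) (iota 0 n)).-1.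

(* trace of the restriction M|_W of an operator M with M W <= W *)
Definition restr_trace (W M : 'M[C]_n) : C :=
  \tr (row_base W *m M^T *m pinvmx (row_base W)).

Definition acts_by (S W : 'M[C]_n) (s : C) : Prop := W *m S^T = s *: W.

Definition Abold (a v w : C) : 'M[C]_n := (a * v)^-1 *: (adjmx - w%:M).
Definition Bbold (x : 'I_n) (E1 : 'M[C]_n) (b vs ws : C) : 'M[C]_n :=
  (b * vs)^-1 *: (dualA x E1 - ws%:M).

Section ModuleParams.
Variables (q a b : C) (D : nat) (x : 'I_n) (E : 'I_D.+1 -> 'M[C]_n).

Definition aW (W : 'M[C]_n) : C :=
  a * q ^ ((2 * dual_endpoint E W + mod_diameter x W)%N%:Z - D%:Z).
Definition bW (W : 'M[C]_n) : C :=
  b * q ^ ((2 * endpoint x W + mod_diameter x W)%N%:Z - D%:Z).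

Definition kappa (Ab W : 'M[C]_n) : C :=
  let d := mod_diameter x W in
  let aw := aW W in let bw := bW W in
  let th (i : nat) := aw * q ^ ((2 * i)%N%:Z - d%:Z) + aw^-1 * q ^ (d%:Z - (2 * i)%N%:Z) in
  let ths (i : nat) := bw * q ^ ((2 * i)%N%:Z - d%:Z) + bw^-1 * q ^ (d%:Z - (2 * i)%N%:Z) in
  let phi1 := (ths 0%N - ths 1%N) * (restr_trace W (Est x (endpoint x W) *m Ab) - th d) in
  if d == 0%N then 0 else
  aw / bw * q ^ (d%:Z - 1) + bw / aw * q ^ (1 - d%:Z)
    + phi1 / ((q - q^-1) * (q ^+ d - q ^- d)).

End ModuleParams.

End Matrices.

Arguments adjmx {C n} e.
Arguments distmx {C n} e i.
Arguments Est {C n} e x i.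

(* The universal Askey-Wilson algebra Delta_q, presented as the        *)
(* quotient of the term algebra over C on generators A, B, C by the    *)
(* congruence generated by the C-algebra axioms and the relations      *)
(* "each of the three elements below is central".                      *)
Section AW.
Variable C : fieldType.

Inductive awterm : Type :=
| AWconst (c : C)
| AWA | AWB | AWC
| AWadd (s t : awterm)
| AWmul (s t : awterm).

Definition AWscale (c : C) (t : awterm) : awterm := AWmul (AWconst c) t.

Definition aw_central_elt (q : C) (X Y Z : awterm) : awterm :=
  AWadd X (AWscale ((q ^+ 2 - q ^- 2)^-1)
            (AWadd (AWscale q (AWmul Y Z)) (AWscale (- q^-1) (AWmul Z Y)))).

Inductive aw_equiv (q : C) : awterm -> awterm -> Prop :=
| awe_refl t : aw_equiv q t t
| awe_sym s t : aw_equiv q s t -> aw_equiv q t s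
| awe_trans s t u : aw_equiv q s t -> aw_equiv q t u -> aw_equiv q s u
| awe_add s s' t t' : aw_equiv q s s' -> aw_equiv q t t' ->
    aw_equiv q (AWadd s t) (AWadd s' t')
| awe_mul s s' t t' : aw_equiv q s s' -> aw_equiv q t t' ->
    aw_equiv q (AWmul s t) (AWmul s' t')
| awe_addA s t u : aw_equiv q (AWadd s (AWadd t u)) (AWadd (AWadd s t) u)
| awe_addC s t : aw_equiv q (AWadd s t) (AWadd t s)
| awe_add0 t : aw_equiv q (AWadd (AWconst 0) t) t
| awe_addN t : aw_equiv q (AWadd t (AWscale (-1) t)) (AWconst 0)
| awe_mulA s t u : aw_equiv q (AWmul s (AWmul t u)) (AWmul (AWmul s t) u)
| awe_mul1l t : aw_equiv q (AWmul (AWconst 1) t) t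
| awe_mul1r t : aw_equiv q (AWmul t (AWconst 1)) t
| awe_mulDl s t u : aw_equiv q (AWmul (AWadd s t) u) (AWadd (AWmul s u) (AWmul t u))
| awe_mulDr s t u : aw_equiv q (AWmul s (AWadd t u)) (AWadd (AWmul s t) (AWmul s u))
| awe_constD c d : aw_equiv q (AWconst (c + d)) (AWadd (AWconst c) (AWconst d))
| awe_constM c d : aw_equiv q (AWconst (c * d)) (AWmul (AWconst c) (AWconst d))
| awe_constC c t : aw_equiv q (AWmul (AWconst c) t) (AWmul t (AWconst c))
| awe_centralA t : aw_equiv q (AWmul (aw_central_elt q AWA AWB AWC) t)
                               (AWmul t (aw_central_elt q AWA AWB AWC))
| awe_centralB t : aw_equiv q (AWmul (aw_central_elt q AWB AWC AWA) t)
                               (AWmul t (aw_central_elt q AWB AWC AWA))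
| awe_centralC t : aw_equiv q (AWmul (aw_central_elt q AWC AWA AWB) t)
                               (AWmul t (aw_central_elt q AWC AWA AWB)).

(* A C-algebra homomorphism Delta_q -> 'M_n, given on representatives:
   it is well defined on the quotient and preserves the operations. *)
Definition aw_hom (q : C) (n : nat) (f : awterm -> 'M[C]_n) : Prop :=
  [/\ (forall s t, aw_equiv q s t -> f s = f t),
      (forall c, f (AWconst c) = c%:M),
      (forall s t, f (AWadd s t) = f s + f t) &
      (forall s t, f (AWmul s t) = f s *m f t)].

End AW.

(* Main.v *)
Require Import Defs.
From HB Require Import structures.
From mathcomp Require Import all_boot all_algebra.
From mathcomp Require Import reals complex.
From Stdlib Require Import Classical.
Set Implicit Arguments.
Unset Strict Implicit.
Unset Printing Implicit Defensive.
Import GRing.Theory Num.Theory.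
Local Open Scope ring_scope.
Section G.
Variables (n : nat) (e : rel 'I_n).
Hypothesis esym : symmetric e.

Lemma ball_mon_in k y z : z \in ball e k y -> z \in ball e k.+1 y.
Proof. by move=> h; rewrite [ball e k.+1 y]/= inE h. Qed.

Lemma ballS k y z : (z \in ball e k.+1 y) =
   (z \in ball e k y) || [exists w in ball e k y, e w z].
Proof. by rewrite [ball e k.+1 y]/= !inE. Qed.

Lemma ball_pre k y y' w : w \in ball e k y -> e y' y -> w \in ball e k.+1 y'.
Proof.
elim: k w => [|k IH] w.
  rewrite [ball e 0 y]/= inE => /eqP -> hy; rewrite ballS; apply/orP; right.
  by apply/existsP; exists y'; rewrite [ball e 0 y']/= inE eqxx hy.
rewrite ballS => /orP [h|].
  by move=> hy; apply: ball_mon_in; apply: IH.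
move=> /existsP [w0 /andP [h0 hw]] hy.
rewrite ballS; apply/orP; right; apply/existsP; exists w0.
by rewrite hw andbT; apply: IH.
Qed.

Lemma ball_sym k y z : z \in ball e k y -> y \in ball e k z.
Proof.
elim: k y z => [|k IH] y z.
  by rewrite [ball e 0 y]/= [ball e 0 z]/= !inE => /eqP ->.
rewrite ballS => /orP [h|].
  by apply: ball_mon_in; apply: IH.
move=> /existsP [w /andP [hw he]].
apply: ball_pre (IH _ _ hw) _; by rewrite esym.
Qed.

Lemma gdist_sym y z : gdist e y z = gdist e z y.
Proof.
rewrite /gdist; apply: eq_find => k.
by apply/idP/idP => /ball_sym.
Qed.
End G.
Section Span.
Variables (C : fieldType) (n : nat) (e : rel 'I_n) (D : nat).

Definition vecs (F : 'I_D.+1 -> 'M[C]_n) : 'M[C]_(D.+1, n * n) :=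
  \matrix_(i < D.+1) mxvec (F i).

Lemma vecs_mul F (y : 'rV[C]_D.+1) :
  y *m vecs F = mxvec (\sum_i y 0 i *: F i).
Proof.
rewrite mulmx_sum_row linear_sum; apply: eq_bigr => i _.
by rewrite linearZ /vecs rowK.
Qed.

Lemma bm_vec (F : 'M[C]_n) : bose_mesner e D F -> (mxvec F <= vecs (distmx e))%MS.
Proof.
move=> [c ->]; apply/submxP; exists (\row_i c i).
rewrite vecs_mul; congr mxvec; apply: eq_bigr => i _; by rewrite mxE.
Qed.

Lemma bm_span (E : 'I_D.+1 -> 'M[C]_n) (F : 'M[C]_n) :
  primitive_idempotents e E -> bose_mesner e D F ->
  exists d : 'I_D.+1 -> C, F = \sum_i d i *: E i.
Proof.
move=> [EBM Eorth Enz _ _] hF.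
have fr : row_free (vecs E).
  apply: inj_row_free => v; rewrite vecs_mul => /eqP.
  rewrite -(inj_eq (can_inj (@vec_mxK _ _ _))) /= mxvecK linear0 => /eqP h0.
  apply/rowP => k; rewrite mxE.
  have : (\sum_i v 0 i *: E i) *m E k = 0 by rewrite h0 mul0mx.
  rewrite mulmx_suml (bigD1 k) //= big1 ?addr0.
    by rewrite -scalemxAl Eorth eqxx => /eqP; rewrite scaler_eq0 (negbTE (Enz k)) orbF => /eqP.
  by move=> i /negbTE ik; rewrite -scalemxAl Eorth ik scaler0.
have sEB : (vecs E <= vecs (distmx e))%MS.
  by apply/row_subP => i; rewrite rowK; apply: bm_vec.
have sBE : (vecs (distmx e) <= vecs E)%MS.
  have [_ <-] := mxrank_leqif_sup sEB.
  rewrite eqn_leq mxrankS //=.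
  by move: fr; rewrite /row_free => /eqP ->; apply: rank_leq_row.
have /submxP [y hy] := submx_trans (bm_vec hF) sBE.
exists (fun i => y 0 i).
by apply: (can_inj (@mxvecK _ _ _)); rewrite hy vecs_mul.
Qed.
End Span.
Section Conj.
Variables (C : numClosedFieldType) (n : nat).

Definition cm (M : 'M[C]_n) : 'M[C]_n := map_mx Num.conj M.
Definition adj (M : 'M[C]_n) : 'M[C]_n := (cm M)^T.

Lemma cmK M : cm (cm M) = M.
Proof. by apply/matrixP => i j; rewrite !mxE conjCK. Qed.
Lemma cmD M N : cm (M + N) = cm M + cm N.
Proof. by apply/matrixP => i j; rewrite !mxE rmorphD. Qed.
Lemma cmN M : cm (- M) = - cm M.
Proof. by apply/matrixP => i j; rewrite !mxE rmorphN. Qed.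
Lemma cmB M N : cm (M - N) = cm M - cm N.
Proof. by rewrite cmD cmN. Qed.
Lemma cmM M N : cm (M *m N) = cm M *m cm N.
Proof. exact: map_mxM. Qed.
Lemma cmZ c M : cm (c *: M) = c^* *: cm M.
Proof. by apply/matrixP => i j; rewrite !mxE rmorphM. Qed.
Lemma cm1 : cm 1%:M = 1%:M.
Proof. by apply/matrixP => i j; rewrite !mxE rmorphMn rmorph1. Qed.
Lemma cm_sum I (r : seq I) (P : pred I) (F : I -> 'M[C]_n) :
  cm (\sum_(i <- r | P i) F i) = \sum_(i <- r | P i) cm (F i).
Proof.
apply/matrixP => i j; rewrite mxE !summxE rmorph_sum.
by apply: eq_bigr => k _; rewrite mxE.
Qed.

Lemma adjD M N : adj (M + N) = adj M + adj N.
Proof. by rewrite /adj cmD linearD. Qed.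
Lemma adjZ c M : adj (c *: M) = c^* *: adj M.
Proof. by rewrite /adj cmZ linearZ. Qed.
Lemma adjM M N : adj (M *m N) = adj N *m adj M.
Proof. by rewrite /adj cmM trmx_mul. Qed.
Lemma adj1 : adj 1%:M = 1%:M.
Proof. by rewrite /adj cm1 trmx1. Qed.

Lemma adj_inT (A As : 'M[C]_n) : adj A = A -> adj As = As ->
  forall M, inT A As M -> inT A As (adj M).
Proof.
move=> hA hAs M; elim => [||| M1 N1 _ h1 _ h2| c M1 _ h1| M1 N1 _ h1 _ h2].
- rewrite hA; exact: inT_A.
- rewrite hAs; exact: inT_As.
- rewrite adj1; exact: inT_1.
- rewrite adjD; exact: inT_add.
- rewrite adjZ; exact: inT_scale.
- rewrite adjM; exact: inT_mul.
Qed.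

Lemma tr_adj_eq0 (M : 'M[C]_n) : \tr (M *m adj M) = 0 -> M = 0.
Proof.
rewrite /mxtrace => h.
have h2 : \sum_i \sum_j M i j * (M i j)^* = 0.
  rewrite -[RHS]h; apply: eq_bigr => i _; rewrite mxE; apply: eq_bigr => j _.
  by rewrite !mxE.
apply/matrixP => i j; rewrite mxE.
move/eqP: h2; rewrite psumr_eq0; last by move=> k _; apply: sumr_ge0 => l _; apply: mul_conjC_ge0.
move=> /allP /(_ i (mem_index_enum _)) /implyP /(_ isT).
rewrite psumr_eq0; last by move=> l _; apply: mul_conjC_ge0.
move=> /allP /(_ j (mem_index_enum _)) /implyP /(_ isT).
by rewrite mul_conjC_eq0 => /eqP.
Qed.
End Conj.
Section Real.
Variables (C : numClosedFieldType) (n : nat) (e : rel 'I_n) (D : nat).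
Hypothesis esym : symmetric e.
Variable E : 'I_D.+1 -> 'M[C]_n.
Hypothesis prim : primitive_idempotents e E.

Lemma distmx_tr i : (distmx e i : 'M[C]_n)^T = distmx e i.
Proof. by apply/matrixP => y z; rewrite !mxE gdist_sym. Qed.

Lemma cm_distmx i : cm (distmx e i : 'M[C]_n) = distmx e i.
Proof. by apply/matrixP => y z; rewrite !mxE conjC_nat. Qed.

Lemma bm_tr (M : 'M[C]_n) : bose_mesner e D M -> M^T = M.
Proof.
move=> [c ->]; rewrite linear_sum; apply: eq_bigr => i _.
by rewrite linearZ /= distmx_tr.
Qed.

Lemma bm_cm (M : 'M[C]_n) : bose_mesner e D M -> bose_mesner e D (cm M).
Proof.
move=> [c ->]; exists (fun i => (c i)^*); rewrite cm_sum; apply: eq_bigr => i _.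
by rewrite cmZ cm_distmx.
Qed.

Lemma E_real k : cm (E k) = E k.
Proof.
have [EBM Eorth Enz _ _] := prim.
set F := cm (E k).
have FBM : bose_mesner e D F by apply: bm_cm.
have [d hd] := bm_span prim FBM.
have hFF : F *m F = F by rewrite /F -cmM Eorth eqxx.
have hFE j : F *m E j = d j *: E j.
  rewrite hd mulmx_suml (bigD1 j) //= big1 ?addr0; first by rewrite -scalemxAl Eorth eqxx.
  by move=> i /negbTE ij; rewrite -scalemxAl Eorth ij scaler0.
have hEF j : E j *m F = d j *: E j.
  rewrite hd mulmx_sumr (bigD1 j) //= big1 ?addr0; first by rewrite -scalemxAr Eorth eqxx.
  by move=> i; rewrite eq_sym => /negbTE ij; rewrite -scalemxAr Eorth ij scaler0.
have Ftr : F^T = F by apply: bm_tr.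
have dk0 : d k != 0.
  apply/negP => /eqP dk0.
  have : E k *m adj (E k) = 0 by rewrite /adj -/F Ftr hEF dk0 scale0r.
  move=> h; move: (Enz k); rewrite (tr_adj_eq0 (M := E k)) ?eqxx //.
  by rewrite h mxtrace0.
have dk1 : d k = 1.
  have : F *m (F *m E k) = F *m E k by rewrite mulmxA hFF.
  rewrite hFE -scalemxAr hFE scalerA => /eqP; rewrite -subr_eq0 -scalerBl scaler_eq0.
  rewrite (negbTE (Enz k)) orbF subr_eq0 => /eqP h.
  by apply: (mulIf dk0); rewrite mul1r.
have hFk : F *m E k = E k by rewrite hFE dk1 scale1r.
have hkF : E k *m F = E k by rewrite hEF dk1 scale1r.
have Ekk : E k *m E k = E k by rewrite Eorth eqxx.
set H := E k - F.
have h1 : H *m H = F - E k.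
  rewrite /H mulmxBl !mulmxBr hFF hFk hkF Ekk.
  by rewrite subrr sub0r opprD opprK addrC.
have h2 : H *m H = H.
  have -> : H = cm (F - E k) by rewrite cmB /F cmK.
  rewrite -cmM mulmxBl !mulmxBr hFF hFk hkF Ekk.
  by rewrite subrr subr0.
have : H *+ 2 = 0.
  by rewrite mulr2n -{1}h2 h1 /H addrA subrK subrr.
move/eqP; rewrite -scaler_nat scaler_eq0 pnatr_eq0 /= /H subr_eq0 => /eqP.
by move=> ->.
Qed.
End Real.
Section QcSec.
Variables (C : fieldType) (n : nat) (A As : 'M[C]_n).
Definition Qc (X : 'M[C]_n) m (V : 'M[C]_(m, n)) :=
  forall M, inT A As M -> V *m M^T *m X^T = V *m X^T *m M^T.

Lemma Qc_sub X m1 m2 (V : 'M_(m1, n)) (W : 'M_(m2, n)) :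
  (V <= W)%MS -> Qc X W -> Qc X V.
Proof.
move=> /submxP [Y ->] hW M hM.
by rewrite -!mulmxA (mulmxA W) hW // !mulmxA.
Qed.

Lemma Qc_add X (V W : 'M_n) : Qc X V -> Qc X W -> Qc X (V + W)%MS.
Proof.
move=> hV hW; apply: (Qc_sub (W := col_mx V W)).
  by rewrite addsmxE submx_refl.
move=> M hM; by rewrite !mul_col_mx hV // hW.
Qed.

Lemma Qc_irr X W s : acts_by X W s -> Tmodule A As W -> Qc X W.
Proof.
rewrite /acts_by => hX hW M hM.
have /submxP [Y hY] := hW _ hM.
have hX' : W *m X^T = s *: W by exact: hX.
rewrite hY -(mulmxA Y).
transitivity (Y *m (s *: W)); first by congr (_ *m _).
transitivity ((s *: W) *m M^T); last by congr (_ *m _); rewrite hX'.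
by rewrite -scalemxAr -scalemxAl hY.
Qed.

Lemma Tmod_cap (U V : 'M[C]_n) : Tmodule A As U -> Tmodule A As V ->
  Tmodule A As (U :&: V)%MS.
Proof.
move=> hU hV M hM; rewrite sub_capmx; apply/andP; split.
  apply: submx_trans (hU _ hM); apply: submxMr; exact: capmxSl.
apply: submx_trans (hV _ hM); apply: submxMr; exact: capmxSr.
Qed.

End QcSec.

Section Reducible.
Variables (C : numClosedFieldType) (n : nat) (A As : 'M[C]_n).
Hypotheses (hA : adj A = A) (hAs : adj As = As).

Lemma Tmod_perp U : Tmodule A As U -> Tmodule A As (kermx (cm U)^T).
Proof.
move=> hU M hM; apply/sub_kermxP.
have hM' := adj_inT hA hAs hM.
have /submxP [Y hY] := hU _ hM'.
have e1 : (adj M)^T = cm M by rewrite /adj trmxK.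
rewrite e1 in hY.
have e2 : M^T *m (cm U)^T = (cm Y *m cm U)^T.
  by rewrite -trmx_mul -cmM -hY cmM cmK.
by rewrite -mulmxA e2 trmx_mul mulmxA mulmx_ker mul0mx.
Qed.

Lemma perp_cap (U : 'M[C]_n) : (U :&: kermx (cm U)^T)%MS = 0.
Proof.
set X := (U :&: _)%MS.
have /submxP [Y hY] : (X <= U)%MS by apply: capmxSl.
have /sub_kermxP hK : (X <= kermx (cm U)^T)%MS by apply: capmxSr.
apply: tr_adj_eq0.
have -> : X *m adj X = 0.
  by rewrite {2}hY /adj cmM trmx_mul mulmxA hK mul0mx.
by rewrite mxtrace0.
Qed.

Lemma perp_full (U : 'M[C]_n) : row_full (U + kermx (cm U)^T)%MS.
Proof.
rewrite /row_full mxrank_disjoint_sum ?perp_cap // mxrank_ker mxrank_tr.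
rewrite /cm mxrank_map subnKC //; exact: rank_leq_row.
Qed.

Variable X : 'M[C]_n.
Hypothesis hX : forall W, irr_Tmodule A As W -> exists s, acts_by X W s.

Lemma Qc_all k : forall U : 'M[C]_n, Tmodule A As U -> (\rank U <= k)%N -> Qc A As X U.
Proof.
elim: k => [|k IH] U hU hr.
  move: hr; rewrite leqn0 mxrank_eq0 => /eqP -> M _.
  by rewrite !mul0mx.
have [U0|Unz] := eqVneq U 0.
  by rewrite U0 => M _; rewrite !mul0mx.
case: (classic (irr_Tmodule A As U)) => [hirr|hnirr].
  by have [s hs] := hX hirr; apply: Qc_irr hs hU.
have [U' [hU' [sU' [U'nz nU']]]] : exists U', Tmodule A As U' /\ (U' <= U)%MS /\
    U' != 0 /\ ~~ (U' == U)%MS.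
  apply: NNPP => hn; apply: hnirr; split => // U' h1 h2.
  case: (eqVneq U' 0) => [->|h3]; first by left.
  right; apply: NNPP => h4; apply: hn; exists U'; do 3!split => //.
  by apply/negP.
set K := kermx (cm U')^T.
have hK : Tmodule A As K by apply: Tmod_perp.
have sU : (U <= U' + (K :&: U))%MS.
  rewrite (matrix_modl K sU').
  rewrite sub_capmx submx_refl andbT; apply: submx_full; exact: perp_full.
have r1 : (\rank U' < \rank U)%N.
  have [le eq] := mxrank_leqif_eq sU'.
  by rewrite ltn_neqAle le andbT eq.
have r2 : (\rank (K :&: U) < \rank U)%N.
  have sKU : (K :&: U <= U)%MS by apply: capmxSr.
  have [le eq] := mxrank_leqif_eq sKU.
  rewrite ltn_neqAle le andbT eq; apply/negP => /andP [_ hUK].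
  have : (U' <= U' :&: K)%MS.
    rewrite sub_capmx submx_refl /=.
    by apply: submx_trans sU' (submx_trans hUK (capmxSl _ _)).
  by rewrite perp_cap submx0 (negbTE U'nz).
apply: Qc_sub sU _; apply: Qc_add.
  by apply: IH => //; rewrite -ltnS; apply: leq_trans r1 hr.
apply: IH; first by apply: Tmod_cap.
by rewrite -ltnS; apply: leq_trans r2 hr.
Qed.

Lemma comm_T M : inT A As M -> X *m M = M *m X.
Proof.
move=> hM.
have h := @Qc_all n 1%:M (fun N _ => submx1 _) (rank_leq_row _) M hM.
rewrite !mul1mx in h.
apply: (can_inj (@trmxK _ _ _)); rewrite !trmx_mul; exact: h.
Qed.
End Reducible.

Lemma invmx_comm (C : fieldType) n (X M : 'M[C]_n) :
  X *m M = M *m X -> invmx X *m M = M *m invmx X.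
Proof.
move=> h; case: (boolP (X \in unitmx)) => hu; last by rewrite invmx_out.
rewrite -[invmx X *m M]mulmx1 -(mulmxV hu) !mulmxA -(mulmxA _ M) -h.
by rewrite !mulmxA mulVmx // mul1mx.
Qed.
Section Ev.
Variables (C : fieldType) (n : nat).

Fixpoint awev (a b c : 'M[C]_n) (t : awterm C) : 'M[C]_n :=
  match t with
  | AWconst k => k%:M
  | AWA => a | AWB => b | AWC => c
  | AWadd s t => awev a b c s + awev a b c t
  | AWmul s t => awev a b c s *m awev a b c t
  end.

Definition commT (A As X : 'M[C]_n) := forall M, inT A As M -> X *m M = M *m X.

Lemma commT_add A As X Y : commT A As X -> commT A As Y -> commT A As (X + Y).
Proof. by move=> hX hY M hM; rewrite mulmxDl mulmxDr hX // hY. Qed.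
Lemma commT_mul A As X Y : commT A As X -> commT A As Y -> commT A As (X *m Y).
Proof. by move=> hX hY M hM; rewrite -mulmxA hY // mulmxA hX // mulmxA. Qed.
Lemma commT_scale A As c X : commT A As X -> commT A As (c *: X).
Proof. by move=> hX M hM; rewrite -scalemxAl hX // scalemxAr. Qed.
Lemma commT_inv A As X : commT A As X -> commT A As (invmx X).
Proof. by move=> hX M hM; apply: invmx_comm; apply: hX. Qed.
End Ev.

Lemma awev_central (C : fieldType) n (a b c : 'M[C]_n) q X Y Z :
  awev a b c (aw_central_elt q X Y Z) =
    awev a b c X + (q ^+ 2 - q ^- 2)^-1 *:
      (q *: (awev a b c Y *m awev a b c Z) - q^-1 *: (awev a b c Z *m awev a b c Y)).
Proof. by rewrite /= !mul_scalar_mx scaleNr. Qed.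

Lemma sm0 (C : fieldType) n : (0 : C)%:M = 0 :> 'M[C]_n.
Proof. exact: raddf0. Qed.
Lemma smD (C : fieldType) n (c d : C) : (c + d)%:M = c%:M + d%:M :> 'M[C]_n.
Proof. exact: raddfD. Qed.
Lemma smN1 (C : fieldType) n (X : 'M[C]_n) : X + (-1)%:M *m X = 0.
Proof. by rewrite mul_scalar_mx scaleN1r subrr. Qed.

Lemma awev_central_comm (C : fieldType) n (a b c : 'M[C]_n) q X Y Z t R0 :
  awev a b c X + (q ^+ 2 - q ^- 2)^-1 *:
      (q *: (awev a b c Y *m awev a b c Z) - q^-1 *: (awev a b c Z *m awev a b c Y)) = R0 ->
  R0 *m awev a b c t = awev a b c t *m R0 ->
  awev a b c (AWmul (aw_central_elt q X Y Z) t) = awev a b c (AWmul t (aw_central_elt q X Y Z)).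
Proof.
move=> h1 h2.
change (awev a b c (aw_central_elt q X Y Z) *m awev a b c t =
        awev a b c t *m awev a b c (aw_central_elt q X Y Z)).
by rewrite awev_central h1.
Qed.
Lemma adj_dualA (C : numClosedFieldType) n (x : 'I_n) (E1 : 'M[C]_n) :
  cm E1 = E1 -> adj (dualA x E1) = dualA x E1.
Proof.
move=> hE1.
have hE' y : (E1 x y)^* = E1 x y by rewrite -{2}hE1 /cm mxE.
apply/matrixP => i j; rewrite /adj /cm /dualA !mxE.
rewrite rmorphMn rmorphM /= rmorph_nat hE' eq_sym.
by case: (eqVneq i j) => [->|].
Qed.

Lemma adj_adjmx (C : numClosedFieldType) n (e : rel 'I_n) :
  symmetric e -> adj (adjmx e : 'M[C]_n) = adjmx e.
Proof. by move=> esym; apply/matrixP => i j; rewrite /adj /cm !mxE conjC_nat esym. Qed.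

Unset Implicit Arguments.
Import GRing.Theory.

Theorem theorem5p14 (R : realType) (n : nat) (e : rel 'I_n) (D : nat) (x : 'I_n)
    (E : 'I_D.+1 -> 'M[R[i]]_n)
    (q u v w us vs ws a b : R[i])
    (abf bbf cbf Lam Cb : 'M[R[i]]_n) :
  (* Gamma: finite connected distance-regular graph of diameter D >= 3 *)
  simple_graph e -> connected_graph e -> distance_regular e ->
  D = diameter e -> (3 <= D)%N ->
  (* q *)
  q != 0 -> q ^+ 4 != 1 ->
  (* E_0..E_D: primitive idempotents, E_0 = |X|^{-1} J, Q-polynomial ordering *)
  primitive_idempotents e E ->
  E ord0 = (n%:R)^-1 *: const_mx 1 ->
  Q_polynomial E ->
  (* q-Racah type *)
  u != 0 -> v != 0 -> us != 0 -> vs != 0 ->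
  adjmx e = \sum_(i < D.+1)
      (w + u * q ^ ((2 * i)%N%:Z - D%:Z) + v * q ^ (D%:Z - (2 * i)%N%:Z)) *: E i ->
  dualA x (E (inord 1)) = \sum_(i < D.+1)
      (ws + us * q ^ ((2 * i)%N%:Z - D%:Z) + vs * q ^ (D%:Z - (2 * i)%N%:Z)) *: Est e x i ->
  a ^+ 2 = u / v -> b ^+ 2 = us / vs ->
  let A := adjmx e in
  let As := dualA x (E (inord 1)) in
  let Ab := Abold e a v w in
  let Bb := Bbold x (E (inord 1)) b vs ws in
  (* every irreducible T-module is thin *)
  (forall W, irr_Tmodule A As W -> thin e x W) ->
  (* \mathbf{a} = sum_psi a(psi) e_psi *)
  (forall W, irr_Tmodule A As W -> acts_by abf W (aW e q a x E W)) ->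
  (* \mathbf{b} = sum_psi b(psi) e_psi *)
  (forall W, irr_Tmodule A As W -> acts_by bbf W (bW e q b D x W)) ->
  (* Lambda = sum_psi q^{d(psi)+1} e_psi *)
  (forall W, irr_Tmodule A As W -> acts_by Lam W (q ^+ (mod_diameter e x W).+1)) ->
  (* \mathbf{c} = sum_psi c(psi) e_psi, c(psi) a fixed root of xi^2 - kappa xi + 1 *)
  (forall W, irr_Tmodule A As W ->
     exists xi, acts_by cbf W xi /\ xi ^+ 2 - kappa e q a b x E Ab W * xi + 1 = 0) ->
  (forall W W' xi xi', irr_Tmodule A As W -> irr_Tmodule A As W' -> Tiso A As W W' ->
     acts_by cbf W xi -> acts_by cbf W' xi' -> xi = xi') ->
  (* \mathbf{C} in T and the three relations *)
  inT A As Cb ->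
  Cb + (q ^+ 2 - q ^- 2)^-1 *: (q *: (Ab *m Bb) - q^-1 *: (Bb *m Ab)) =
    (q + q^-1)^-1 *: ((cbf + invmx cbf) *m (Lam + invmx Lam)
                      + (abf + invmx abf) *m (bbf + invmx bbf)) ->
  Ab + (q ^+ 2 - q ^- 2)^-1 *: (q *: (Bb *m Cb) - q^-1 *: (Cb *m Bb)) =
    (q + q^-1)^-1 *: ((abf + invmx abf) *m (Lam + invmx Lam)
                      + (bbf + invmx bbf) *m (cbf + invmx cbf)) ->
  Bb + (q ^+ 2 - q ^- 2)^-1 *: (q *: (Cb *m Ab) - q^-1 *: (Ab *m Cb)) =
    (q + q^-1)^-1 *: ((bbf + invmx bbf) *m (Lam + invmx Lam)
                      + (cbf + invmx cbf) *m (abf + invmx abf)) ->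
  (* conclusion: a surjective C-algebra homomorphism Delta_q -> T *)
  exists f : awterm R[i] -> 'M[R[i]]_n,
    [/\ aw_hom q f,
        [/\ f (AWA _) = Ab, f (AWB _) = Bb & f (AWC _) = Cb],
        (forall s, inT A As (f s)) &
        (forall M, inT A As M -> exists s, f s = M)].
Proof.
move=> [hsym _] _ _ _ _ _ _ prim _ _ u0 v0 us0 vs0 _ _ ha hb A As Ab Bb _
  habf hbbf hLam hcbf _ hCb eqC eqA eqB.
have hAadj : adj A = A by by apply: adj_adjmx.
have hE1 := E_real hsym prim (inord 1).
have hAsadj : adj As = As by apply: adj_dualA.
have cabf : commT A As abf.
  by move=> M hM; apply: (comm_T hAadj hAsadj) => // W hW; exists (aW e q a x E W); apply: habf.
have cbbf : commT A As bbf.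
  by move=> M hM; apply: (comm_T hAadj hAsadj) => // W hW; exists (bW e q b D x W); apply: hbbf.
have cLam : commT A As Lam.
  by move=> M hM; apply: (comm_T hAadj hAsadj) => // W hW; eexists; apply: hLam.
have ccbf : commT A As cbf.
  move=> M hM; apply: (comm_T hAadj hAsadj) => // W hW.
  by have [xi [h _]] := hcbf W hW; exists xi.
have cS X : commT A As X -> commT A As (X + invmx X).
  by move=> h; apply: commT_add => //; apply: commT_inv.
have a0 : a != 0.
  apply/negP => /eqP a0; move: ha; rewrite a0 expr0n /= => /esym/eqP.
  by rewrite mulf_eq0 invr_eq0 (negbTE u0) (negbTE v0).
have b0 : b != 0.
  apply/negP => /eqP b0; move: hb; rewrite b0 expr0n /= => /esym/eqP.
  by rewrite mulf_eq0 invr_eq0 (negbTE us0) (negbTE vs0).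
have AbT : inT A As Ab.
  apply: inT_scale.
  have -> : adjmx e - w%:M = A + (-w) *: 1%:M by rewrite scaleNr scalemx1.
  apply: inT_add; first exact: inT_A.
  by apply: inT_scale; exact: inT_1.
have BbT : inT A As Bb.
  apply: inT_scale.
  have -> : As - ws%:M = As + (-ws) *: 1%:M by rewrite scaleNr scalemx1.
  apply: inT_add; first exact: inT_As.
  by apply: inT_scale; exact: inT_1.
have fT : forall s, inT A As (awev Ab Bb Cb s).
  elim => [c||||s1 h1 s2 h2|s1 h1 s2 h2] /=.
  - by move: (inT_scale c (inT_1 A As)); rewrite scalemx1.
  - exact: AbT.
  - exact: BbT.
  - exact: hCb.
  - exact: inT_add.
  - exact: inT_mul.
exists (awev Ab Bb Cb); split => //.
- split => // s t; elim.
  + by [].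
  + by move=> ? ? _ -> /=.
  + by move=> ? ? ? _ -> _ -> /=.
  + by move=> ? ? ? ? _ e1 _ e2 /=; rewrite e1 e2.
  + by move=> ? ? ? ? _ e1 _ e2 /=; rewrite e1 e2.
  + by move=> ? ? ? /=; rewrite addrA.
  + by move=> ? ? /=; rewrite addrC.
  + by move=> ? /=; rewrite sm0 add0r.
  + by move=> ? /=; rewrite smN1 sm0.
  + by move=> ? ? ? /=; rewrite mulmxA.
  + by move=> ? /=; rewrite mul1mx.
  + by move=> ? /=; rewrite mulmx1.
  + by move=> ? ? ? /=; rewrite mulmxDl.
  + by move=> ? ? ? /=; rewrite mulmxDr.
  + by move=> ? ? /=; rewrite smD.
  + by move=> ? ? /=; rewrite scalar_mxM.
  + by move=> ? ? /=; rewrite scalar_mxC.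
  + move=> t0; apply: (@awev_central_comm _ _ Ab Bb Cb q (AWA _) (AWB _) (AWC _) t0 _ eqA).
    apply: commT_scale; last exact: fT.
    by apply: commT_add; apply: commT_mul; apply: cS.
  + move=> t0; apply: (@awev_central_comm _ _ Ab Bb Cb q (AWB _) (AWC _) (AWA _) t0 _ eqB).
    apply: commT_scale; last exact: fT.
    by apply: commT_add; apply: commT_mul; apply: cS.
  + move=> t0; apply: (@awev_central_comm _ _ Ab Bb Cb q (AWC _) (AWA _) (AWB _) t0 _ eqC).
    apply: commT_scale; last exact: fT.
    by apply: commT_add; apply: commT_mul; apply: cS.
- move=> M; elim => [|||M1 N1 _ [s1 h1] _ [s2 h2]|c M1 _ [s1 h1]|M1 N1 _ [s1 h1] _ [s2 h2]].
  + exists (AWadd (AWmul (AWconst (a * v)) (AWA _)) (AWconst w)).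
    rewrite /= mul_scalar_mx /Ab /Abold scalerA mulfV ?mulf_neq0 // scale1r.
    by rewrite subrK.
  + exists (AWadd (AWmul (AWconst (b * vs)) (AWB _)) (AWconst ws)).
    rewrite /= mul_scalar_mx /Bb /Bbold scalerA mulfV ?mulf_neq0 // scale1r.
    by rewrite subrK.
  + by exists (AWconst 1).
  + by exists (AWadd s1 s2); rewrite /= h1 h2.
  + by exists (AWmul (AWconst c) s1); rewrite /= h1 mul_scalar_mx.
  + by exists (AWmul s1 s2); rewrite /= h1 h2.
Qed.
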